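(* Let $d\ge2$ and consider a $d$-dimensional system in the maximally mixed initial state $\mathbb{1}/d$, with two measurement settings $x,y\in\{0,1\}$ and outcomes $\pm$. Each measurement $x$ is specified by effects $\mathcal{E}_{\pm|x}$ (positive semidefinite, summing to $\mathbb{1}$) and post-measurement states $\sigma_{\pm|x}$, the same measurements being used at both time steps, with $p(ab|xy)=\mathrm{tr}(\mathcal{E}_{a|x}\mathbb{1}/d)\,\mathrm{tr}(\mathcal{E}_{b|y}\sigma_{a|x})$. Then, for all such choices, $$\mathcal{B}_1=p(++|00)+p(++|11)+p(+-|01)+p(+-|10)\le \max\left[3,\,4\left(1-\tfrac1d\right)\right].$$ *)

(* Defs.v *)
From HB Require Import structures.
From mathcomp Require Import all_boot all_order all_algebra.
From mathcomp Require Import complex reals.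
Set Implicit Arguments. Unset Strict Implicit. Unset Printing Implicit Defensive.
Import Order.TTheory GRing.Theory Num.Theory.
Local Open Scope ring_scope.
Local Open Scope complex_scope.

Definition adjmx (C : numClosedFieldType) m n (A : 'M[C]_(m, n)) : 'M[C]_(n, m) :=
  (map_mx Num.conj A)^T.

Definition psd (C : numClosedFieldType) d (A : 'M[C]_d) : Prop :=
  adjmx A = A /\ forall v : 'cV[C]_d, 0 <= (adjmx v *m A *m v) 0 0.

Definition density (C : numClosedFieldType) d (rho : 'M[C]_d) : Prop :=
  psd rho /\ \tr rho = 1.

(* Two-outcome measurement instrument, indexed by setting x : bool
   (false = 0, true = 1) and outcome a : bool (true = '+', false = '-'):
   effects E x a are psd and sum to the identity; the post-measurement
   state for outcome a of setting x is sigma x a, a density matrix. *)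
Definition valid_measurements (C : numClosedFieldType) d
    (E sigma : bool -> bool -> 'M[C]_d) : Prop :=
  (forall x a, psd (E x a)) /\
  (forall x, E x true + E x false = 1%:M) /\
  (forall x a, density (sigma x a)).

Definition seqprob (C : numClosedFieldType) d (E sigma : bool -> bool -> 'M[C]_d)
    (a b x y : bool) : C :=
  \tr (E x a *m ((d%:R)^-1 *: 1%:M)) * \tr (E y b *m sigma x a).

Definition B1 (C : numClosedFieldType) d (E sigma : bool -> bool -> 'M[C]_d) : C :=
  seqprob E sigma true true false false + seqprob E sigma true true true true
  + seqprob E sigma true false false true + seqprob E sigma true false true false.

(* Main.v *)
Require Import Defs.
From HB Require Import structures.
From mathcomp Require Import all_boot all_order all_algebra.
From mathcomp Require Import complex reals.
From mathcomp Require Import ring lra.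
Import Order.TTheory GRing.Theory Num.Theory.
Local Open Scope ring_scope.
Section Gen.
Context {C : numClosedFieldType} {n : nat}.
Local Open Scope sesquilinear_scope.

Lemma adjE m p (A : 'M[C]_(m, p)) : adjmx A = A ^t* .
Proof. by rewrite /adjmx map_trmx. Qed.

Lemma unitary_sq (P : 'M[C]_n) : P \is unitarymx -> P ^t* *m P = 1%:M.
Proof.
move=> PU; rewrite -invmx_unitary // mulVmx //; exact: unitarymx_unit.
Qed.

Lemma diag_entry (P F : 'M[C]_n) i :
  (P *m F *m P ^t*) i i = (adjmx (col i (P ^t*)) *m F *m col i (P ^t*)) 0 0.
Proof.
have -> : adjmx (col i (P ^t*)) = row i P.
  by apply/matrixP => a b; rewrite !mxE conjCK.
rewrite !mxE; apply: eq_bigr => j _; rewrite !mxE; congr (_ * _).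
by apply: eq_bigr => k _; rewrite !mxE.
Qed.

Lemma decomp (S : 'M[C]_n) : adjmx S = S ->
  forall F, \tr (F *m S) = \sum_i (spectralmx S *m S *m (spectralmx S)^t*) i i
                             * (spectralmx S *m F *m (spectralmx S)^t*) i i.
Proof.
move=> SH F; set P := spectralmx S.
have PU : P \is unitarymx by exact: spectral_unitarymx.
have /orthomx_spectralP : S \is normalmx.
  by apply/normalmxP; rewrite -adjE SH.
move=> SE; rewrite -/P invmx_unitary // in SE.
set D := spectral_diag S in SE *.
have PPt : P *m P^t* = 1%:M by apply/unitarymxP.
have -> : P *m S *m P^t* = diag_mx D.
  by rewrite {1}SE !mulmxA PPt mul1mx -mulmxA PPt mulmx1.
rewrite {1}SE mulmxA mxtrace_mulC !mulmxA mxtrace_mulC.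
rewrite /mxtrace; apply: eq_bigr => i _.
rewrite mul_diag_mx mxE [X in _ = X * _]mxE eqxx mulr1n //.
Qed.

Lemma diag_ge0 (P F : 'M[C]_n) i : psd F -> 0 <= (P *m F *m P ^t*) i i.
Proof. by move=> [_ Fp]; rewrite diag_entry. Qed.

Lemma sum_diag (P F : 'M[C]_n) : P \is unitarymx ->
  \sum_i (P *m F *m P ^t*) i i = \tr F.
Proof.
move=> PU.
have -> : \sum_i (P *m F *m P ^t*) i i = \tr (P *m F *m P^t*) by [].
by rewrite mxtrace_mulC mulmxA unitary_sq // mul1mx.
Qed.

Lemma L1 (F S : 'M[C]_n) : psd F -> density S -> 0 <= \tr (F *m S).
Proof.
move=> Fp [Sp _]; rewrite (decomp _ Sp.1).
by apply: sumr_ge0 => i _; apply: mulr_ge0; apply: diag_ge0.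
Qed.

Lemma L2 (F S : 'M[C]_n) : psd F -> density S -> \tr (F *m S) <= \tr F.
Proof.
move=> Fp [Sp S1]; rewrite (decomp _ Sp.1).
set P := spectralmx S.
have PU : P \is unitarymx by exact: spectral_unitarymx.
rewrite -(sum_diag _ F PU); apply: ler_sum => i _.
apply: ler_piMl; first exact: diag_ge0.
rewrite -S1 -(sum_diag _ S PU) (bigD1 i) //= lerDl.
by apply: sumr_ge0 => j _; apply: diag_ge0.
Qed.

Lemma L3 (F G S : 'M[C]_n) : psd F -> psd G -> F + G = 1%:M -> density S ->
  \tr (F *m S) <= 1.
Proof.
move=> Fp Gp FG Sd.
have : \tr (F *m S) + \tr (G *m S) = 1.
  by rewrite -mxtraceD -mulmxDl FG mul1mx Sd.2.
move=> <-; rewrite lerDl; exact: L1.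
Qed.

Lemma dens0 : (0 < n)%N -> density ((n%:R : C)^-1 *: (1%:M : 'M[C]_n)).
Proof.
move=> n0; split; last first.
  by rewrite mxtraceZ mxtrace1 mulVf // pnatr_eq0 -lt0n.
split.
  apply/matrixP => i j; rewrite !mxE rmorphM fmorphV !rmorph_nat eq_sym //.
move=> v; rewrite -scalemxAr mulmx1 -scalemxAl mxE.
apply: mulr_ge0; first by rewrite invr_ge0 ler0n.
rewrite mxE; apply: sumr_ge0 => j _; rewrite !mxE.
by rewrite mulrC -normCK exprn_ge0.
Qed.
End Gen.

Local Open Scope complex_scope.
Lemma realpart (R : realFieldType) (D u e0 e1 q00 q11 r01 r10 : R) :
  2 <= D -> D * u = 1 -> 0 <= e0 <= 1 -> 0 <= e1 <= 1 ->
  0 <= q00 <= 1 -> 0 <= q11 <= 1 -> 0 <= r01 <= 1 -> 0 <= r10 <= 1 ->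
  r01 <= D * (1 - e1) -> r10 <= D * (1 - e0) ->
  e0 * q00 + e1 * q11 + e0 * r01 + e1 * r10 <= Num.max 3 (4 * (1 - u)).
Proof.
move=> hD hu /andP[he0 he0'] /andP[he1 he1'] /andP[hq0 hq0'] /andP[hq1 hq1']
  /andP[hr0 hr0'] /andP[hr1 hr1'] hr01 hr10.
have hu0 : 0 < u. 
  have : D != 0 by apply/eqP => D0; move: hD; rewrite D0; lra.
  move=> Dn0; have -> : u = D^-1 by rewrite -(mulKf Dn0 u) hu mulr1.
  by rewrite invr_gt0; lra.
have a1 : e0 * q00 <= e0 by nra.
have a2 : e1 * q11 <= e1 by nra.
have a3 : e0 * r01 <= e0 * Num.min 1 (D * (1 - e1)).
  by rewrite ler_wpM2l // le_min hr0' hr01.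
have a4 : e1 * r10 <= e1 * Num.min 1 (D * (1 - e0)).
  by rewrite ler_wpM2l // le_min hr1' hr10.
rewrite le_max; apply/orP.
have [D3|D3] := lerP 3 D.
- right.
  case: (lerP 1 (D * (1 - e1))) => h1; case: (lerP 1 (D * (1 - e0))) => h0.
  + rewrite (min_l h1) in a3; rewrite (min_l h0) in a4. nra.
  + rewrite (min_l h1) in a3; rewrite (min_r (ltW h0)) in a4. nra.
  + rewrite (min_r (ltW h1)) in a3; rewrite (min_l h0) in a4. nra.
  + rewrite (min_r (ltW h1)) in a3; rewrite (min_r (ltW h0)) in a4. nra.
- left.
  case: (lerP 1 (D * (1 - e1))) => h1; case: (lerP 1 (D * (1 - e0))) => h0.
  + rewrite (min_l h1) in a3; rewrite (min_l h0) in a4. nra.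
  + rewrite (min_l h1) in a3; rewrite (min_r (ltW h0)) in a4. nra.
  + rewrite (min_r (ltW h1)) in a3; rewrite (min_l h0) in a4. nra.
  + rewrite (min_r (ltW h1)) in a3; rewrite (min_r (ltW h0)) in a4. nra.
Qed.

Lemma toR {R : rcfType} {x : R[i]} : 0 <= x -> x = (complex.Re x)%:C.
Proof. by case: x => a b; rewrite lecE /= => /andP[/eqP -> _]. Qed.

Lemma realpartC (R : realType) (d : nat) (e0 e1 q00 q11 r01 r10 : R[i]) :
  (2 <= d)%N -> 0 <= e0 -> e0 <= 1 -> 0 <= e1 -> e1 <= 1 ->
  0 <= q00 -> q00 <= 1 -> 0 <= q11 -> q11 <= 1 ->
  0 <= r01 -> r01 <= 1 -> 0 <= r10 -> r10 <= 1 ->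
  r01 <= d%:R * (1 - e1) -> r10 <= d%:R * (1 - e0) ->
  e0 * q00 + e1 * q11 + e0 * r01 + e1 * r10
    <= (Num.max (3 : R) (4 * (1 - (d%:R)^-1)))%:C.
Proof.
move=> hd h1 h2 h3 h4 h5 h6 h7 h8 h9 h10 h11 h12 h13 h14.
rewrite (toR h1) (toR h3) (toR h5) (toR h7) (toR h9) (toR h11) in h2 h4 h6 h8 h10 h12 h13 h14 *.
set E0 := complex.Re e0 in h2 h13 h14 *. set E1 := complex.Re e1 in h4 h13 h14 *.
set Q0 := complex.Re q00 in h6 *. set Q1 := complex.Re q11 in h8 *.
set A := complex.Re r01 in h10 h13 *. set B := complex.Re r10 in h12 h14 *.
have eq : E0%:C * Q0%:C + E1%:C * Q1%:C + E0%:C * A%:C + E1%:C * B%:C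
  = (E0 * Q0 + E1 * Q1 + E0 * A + E1 * B)%:C by rewrite !rmorphD !rmorphM.
rewrite eq lecR.
have g2 : E0 <= 1 by rewrite -lecR.
have g4 : E1 <= 1 by rewrite -lecR.
have g6 : Q0 <= 1 by rewrite -lecR.
have g8 : Q1 <= 1 by rewrite -lecR.
have g10 : A <= 1 by rewrite -lecR.
have g12 : B <= 1 by rewrite -lecR.
have g13 : A <= d%:R * (1 - E1) by rewrite -lecR rmorphM rmorphB rmorph1 rmorph_nat.
have g14 : B <= d%:R * (1 - E0) by rewrite -lecR rmorphM rmorphB rmorph1 rmorph_nat.
have p1 : 0 <= E0 by move: h1; rewrite lecE => /andP[_].
have p3 : 0 <= E1 by move: h3; rewrite lecE => /andP[_].
have p5 : 0 <= Q0 by move: h5; rewrite lecE => /andP[_].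
have p7 : 0 <= Q1 by move: h7; rewrite lecE => /andP[_].
have p9 : 0 <= A by move: h9; rewrite lecE => /andP[_].
have p11 : 0 <= B by move: h11; rewrite lecE => /andP[_].
apply: (@realpart R d%:R (d%:R)^-1) => //; rewrite ?p1 ?p3 ?p5 ?p7 ?p9 ?p11 //.
- by rewrite (ler_nat R 2 d).
- by rewrite mulfV // pnatr_eq0 gtn_eqF // (ltn_trans _ hd).
Qed.

Local Open Scope complex_scope.

Theorem mainTheorem6 (R : realType) (d : nat) (hd : (2 <= d)%N)
    (E sigma : bool -> bool -> 'M[R[i]]_d) :
  valid_measurements E sigma ->
  B1 E sigma <= (Num.max (3 : R) (4 * (1 - (d%:R)^-1)))%:C.
Proof.
move=> [Ep [Esum Sd]].
have d0 : (0 < d)%N by apply: ltn_trans hd.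
have dn0 : (d%:R : R[i]) != 0 by rewrite pnatr_eq0 gtn_eqF.
have Dd := @dens0 R[i] _ d0.
have EE x : E x false + E x true = 1%:M by rewrite addrC Esum.
have trE x : \tr (E x false) = d%:R * (1 - \tr (E x true *m ((d%:R)^-1 *: 1%:M))).
  rewrite -scalemxAr mulmx1 mxtraceZ.
  have : \tr (E x true) + \tr (E x false) = d%:R by rewrite -mxtraceD Esum mxtrace1.
  move=> h; rewrite mulrBr mulr1 mulrA mulfV // mul1r -h; ring.
rewrite /B1 /seqprob; apply: realpartC => //.
- exact: L1 _ _ (Ep _ _) Dd.
- exact: L3 _ _ _ (Ep _ _) (Ep _ _) (Esum _) Dd.
- exact: L1 _ _ (Ep _ _) Dd.
- exact: L3 _ _ _ (Ep _ _) (Ep _ _) (Esum _) Dd.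
- exact: L1 _ _ (Ep _ _) (Sd _ _).
- exact: L3 _ _ _ (Ep _ _) (Ep _ _) (Esum _) (Sd _ _).
- exact: L1 _ _ (Ep _ _) (Sd _ _).
- exact: L3 _ _ _ (Ep _ _) (Ep _ _) (Esum _) (Sd _ _).
- exact: L1 _ _ (Ep _ _) (Sd _ _).
- exact: L3 _ _ _ (Ep _ _) (Ep _ _) (EE _) (Sd _ _).
- exact: L1 _ _ (Ep _ _) (Sd _ _).
- exact: L3 _ _ _ (Ep _ _) (Ep _ _) (EE _) (Sd _ _).
- by rewrite -trE; exact: L2 _ _ (Ep _ _) (Sd _ _).
- by rewrite -trE; exact: L2 _ _ (Ep _ _) (Sd _ _).
Qed.
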